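(* Let $X$ be a set, $F:\mathcal{P}(X)\to\mathcal{P}(X)$ an interior operator, and $\kappa$ a cardinal. If the complete sup-lattice $(\mathbf{Fix}(F),\subseteq,\bigcup)$ has a basis indexed by a set of cardinality $\kappa$, then $F$ has a resolution whose interpolant $Y$ has cardinality $\kappa$, i.e. there exist a set $Y$ with $|Y|=\kappa$ and a relation $r\subseteq X\times Y$ such that $F=\langle r\rangle\circ[r^{\sim}]$.
   Context: An interior operator on $\mathcal{P}(X)$ is a map $F$ that is monotonic, contractive ($F(U)\subseteq U$), and satisfies $F(U)\subseteq F(F(U))$; $\mathbf{Fix}(F)=\{U\subseteq X\mid F(U)=U\}$, which is closed under arbitrary unions. A basis of a complete sup-lattice $(L,\leq,\bigvee)$ is a family $(x_i)_{i\in I}$ of elements of $L$ such that for every $y\in L$, $y=\bigvee\{x_i\mid x_i\leq y\}$; it is indexed by $I$. For $r\subseteq X\times Y$, $r^{\sim}=\{(y,x)\mid (x,y)\in r\}$. For $t\subseteq A\times B$, $\langle t\rangle,[t]:\mathcal{P}(B)\to\mathcal{P}(A)$ are $\langle t\rangle(V)=\{a\mid \exists b,\ (a,b)\in t\wedge b\in V\}$ and $[t](V)=\{a\mid \forall b,\ (a,b)\in t\Rightarrow b\in V\}$. *)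

(* Defs.v *)
From mathcomp Require Import all_boot.
From mathcomp Require Import boolp classical_sets.
Set Implicit Arguments. Unset Strict Implicit. Unset Printing Implicit Defensive.
Local Open Scope classical_set_scope.

Definition interior_operator (X : Type) (F : set X -> set X) : Prop :=
  [/\ (forall U V : set X, U `<=` V -> F U `<=` F V),
      (forall U : set X, F U `<=` U) &
      (forall U : set X, F U `<=` F (F U))].

Definition Fix (X : Type) (F : set X -> set X) : set (set X) :=
  [set U | F U = U].

Definition is_basis_Fix (X I : Type) (F : set X -> set X) (b : I -> set X) : Prop :=
  (forall i, Fix F (b i)) /\
  (forall y : set X, Fix F y -> y = \bigcup_(i in [set i | b i `<=` y]) b i).

Definition conv (A B : Type) (r : A -> B -> Prop) : B -> A -> Prop :=
  fun b a => r a b.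

Definition diamond (A B : Type) (t : A -> B -> Prop) (V : set B) : set A :=
  [set a | exists b, t a b /\ V b].
Definition box (A B : Type) (t : A -> B -> Prop) (V : set B) : set A :=
  [set a | forall b, t a b -> V b].

(* Main.v *)
Require Import Defs.
From mathcomp Require Import all_boot.
From mathcomp Require Import boolp classical_sets.
Local Open Scope classical_set_scope.

Theorem corollary2 (X I : Type) (F : set X -> set X) :
  interior_operator F ->
  (exists b : I -> set X, is_basis_Fix F b) ->
  exists (Y : Type) (f : I -> Y), bijective f /\
    exists r : X -> Y -> Prop,
      F = (fun U : set X => diamond r (box (conv r) U)).
Proof.
move=> [mono contr idem] [b [bfix bbasis]].
exists I, id; split; first by exists id.
exists (fun x i => b i x).
apply: funext => U.
have FU : Fix F (F U).
  rewrite /Fix /=; apply: eq_set => x; apply: propext; split.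
  - by move=> /contr.
  - by move=> /idem.
rewrite {1}(bbasis _ FU).
apply: eq_set => x; apply: propext; split.
- move=> [i /= Hi bix]; exists i; split => // y biy.
  exact: contr (Hi _ biy).
- move=> [i [bix Hi]]; exists i => //= y biy.
  have := bfix i; rewrite /Fix /= => E.
  have : F (b i) y by rewrite E.
  by apply: mono => z; apply: Hi.
Qed.
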